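(* Let $\mathcal{F}$ be a monotone feature. Then the ip-function generators $\sigma^{\mathcal{F}}=\varrho^{\mathcal{F}}$ are balanced: for every graph $G=(V,E)$, every two filtering functions $f,g:E\to\mathbb{R}$ and every $h>0$ with $\sup_{e\in E}|f(e)-g(e)|\le h$, one has $\sigma^{\mathcal{F}}_{(G,f)}(u-h,v+h)\le\sigma^{\mathcal{F}}_{(G,g)}(u,v)$ for all $(u,v)\in\Delta^+$.
   Context: Graphs are finite simple undirected graphs; a weighted graph is $(G,f)$ with $f:E\to\mathbb{R}$. For $u\in\mathbb{R}$, $G_u=(V_u,E_u)$ is the subgraph induced by the edge set $f^{-1}((-\infty,u])$, $G_{+\infty}=G$. Only subgraphs induced by edge sets are considered. $\Delta^+=\{(u,v)\in\mathbb{R}\times(\mathbb{R}\cup\{+\infty\}):u<v\}$, with $+\infty+h=+\infty$. A feature $\mathcal{F}$ assigns to every graph $H=(V_H,E_H)$ a function $2^{V_H\cup E_H}\to\{true,false\}$. It is monotone if (i) for any graphs $G'=(V',E')\subset G''$ and any $X\subseteq V'\cup E'$, $\mathcal{F}(X)=true$ in $G''$ implies $\mathcal{F}(X)=true$ in $G'$; and (ii) in any graph, for $Y\subset X$, $\mathcal{F}(X)=true$ implies $\mathcal{F}(Y)=true$. $X\subseteq V\cup E$ is an $\mathcal{F}$-set at level $w$ in $(G,f)$ if $X\subseteq V_w\cup E_w$ and $\mathcal{F}(X)=true$ in $G_w$; steady at $(u,v)$ if an $\mathcal{F}$-set at all levels $w\in[u,v]$; ranging at $(u,v)$ if an $\mathcal{F}$-set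 at some level $w\le u$ and some level $w'\ge v$. $\sigma^{\mathcal{F}}_{(G,f)}(u,v)$, $\varrho^{\mathcal{F}}_{(G,f)}(u,v)$ are the numbers of steady, resp. ranging, $\mathcal{F}$-sets at $(u,v)$ (for monotone $\mathcal{F}$ these coincide). An ip-function generator $p$ (a map assigning to each weighted graph a function $p_{(G,f)}:\Delta^+\to\mathbb{Z}$ satisfying the persistence inequalities, invariant under isomorphism of weighted graphs) is balanced if whenever $\psi:G\to G'$ is a graph isomorphism and $\sup_{e\in E}|f(e)-f'(\psi(e))|\le h$ with $h>0$, then $p_{(G,f)}(u-h,v+h)\le p_{(G',f')}(u,v)$ for all $(u,v)\in\Delta^+$; equivalently, the single-graph condition stated in the claim holds. *)

(* Defs.v *)
From HB Require Import structures.
From mathcomp Require Import all_boot all_order all_algebra.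
From mathcomp Require Import boolp reals constructive_ereal.
Set Implicit Arguments. Unset Strict Implicit. Unset Printing Implicit Defensive.
Import Order.TTheory GRing.Theory Num.Theory.
Local Open Scope ring_scope.
Local Open Scope ereal_scope.

(* A graph is a pair
   (V, E) with V : {set T} and E a set of 2-element subsets of V (finite,
   simple, undirected).  Elements of V \cup E live in T + {set T}. *)
Definition is_graph (T : finType) (V : {set T}) (E : {set {set T}}) : bool :=
  [forall e in E, (#|e| == 2)%N && (e \subset V)].

Definition items (T : finType) (V : {set T}) (E : {set {set T}})
  : {set (T + {set T})} :=
  [set x | match x with inl v => v \in V | inr e => e \in E end].

(* A feature: to every graph (V,E) it assigns a boolean function on subsets of
   V \cup E (values outside of 2^(V \cup E) are irrelevant). *)
Definition feature (T : finType) :=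
  {set T} -> {set {set T}} -> {set (T + {set T})} -> bool.

Definition monotone_feature (T : finType) (F : feature T) : Prop :=
  (forall V' E' V'' E'' (X : {set (T + {set T})}),
      is_graph V' E' -> is_graph V'' E'' ->
      V' \subset V'' -> E' \subset E'' ->
      X \subset items V' E' ->
      F V'' E'' X -> F V' E' X)
  /\
  (forall V E (X Y : {set (T + {set T})}),
      is_graph V E -> X \subset items V E -> Y \subset X ->
      F V E X -> F V E Y).

Section Filt.
Context (T : finType) (R : realType).

(* Sublevel subgraph G_w induced by the edge set f^{-1}((-oo, w]);
   G_{+oo} = G. *)
Definition subE (E : {set {set T}}) (f : {set T} -> R) (w : \bar R)
  : {set {set T}} := [set e in E | (f e)%:E <= w].

Definition subV (V : {set T}) (E : {set {set T}}) (f : {set T} -> R)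
  (w : \bar R) : {set T} :=
  if w == +oo then V
  else [set x in V | [exists e in subE E f w, x \in e]].

Definition Fset_at (F : feature T) V E (f : {set T} -> R) (w : \bar R)
  (X : {set (T + {set T})}) : bool :=
  (X \subset items (subV V E f w) (subE E f w)) && F (subV V E f w) (subE E f w) X.

Definition steady (F : feature T) V E f (u : R) (v : \bar R) X : Prop :=
  forall w : \bar R, u%:E <= w -> w <= v -> Fset_at F V E f w X.

Definition ranging (F : feature T) V E f (u : R) (v : \bar R) X : Prop :=
  (exists w : R, (w <= u)%R /\ Fset_at F V E f w%:E X) /\
  (exists w' : \bar R, v <= w' /\ Fset_at F V E f w' X).

Definition sigmaF (F : feature T) V E f (u : R) (v : \bar R) : nat :=
  #|[set X : {set (T + {set T})} | `[< steady F V E f u v X >]]|.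

Definition rhoF (F : feature T) V E f (u : R) (v : \bar R) : nat :=
  #|[set X : {set (T + {set T})} | `[< ranging F V E f u v X >]]|.
End Filt.

(* Main.v *)
Require Import Defs.
From HB Require Import structures.
From mathcomp Require Import all_boot all_order all_algebra.
From mathcomp Require Import boolp reals constructive_ereal.
From mathcomp Require Import lra.
Import Order.TTheory GRing.Theory Num.Theory.
Local Open Scope ring_scope.

Section Helpers.
Set Implicit Arguments. Unset Strict Implicit.
Context (T : finType) (R : realType).
Local Open Scope ereal_scope.

Lemma items_sub (V1 V2 : {set T}) (E1 E2 : {set {set T}}) :
  V1 \subset V2 -> E1 \subset E2 -> items V1 E1 \subset items V2 E2.
Proof.
move=> /subsetP sV /subsetP sE; apply/subsetP => -[x|x]; rewrite !inE.
  exact: sV.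
exact: sE.
Qed.

Lemma subE_sub (E : {set {set T}}) (f1 g : {set T} -> R) (a z : \bar R) :
  (forall e, e \in E -> (f1 e)%:E <= a -> (g e)%:E <= z) ->
  subE E f1 a \subset subE E g z.
Proof.
move=> H; apply/subsetP => e; rewrite !inE => /andP[eE le].
by rewrite eE (H e eE le).
Qed.

Lemma subV_sub (V : {set T}) (E : {set {set T}}) (f1 g : {set T} -> R)
  (a z : \bar R) :
  subE E f1 a \subset subE E g z -> (a = +oo -> z = +oo) ->
  subV V E f1 a \subset subV V E g z.
Proof.
move=> /subsetP sE Hoo; rewrite /subV.
have [zo|zn] := eqVneq z +oo.
  case: ifP => _ //; apply/subsetP => x; rewrite inE => /andP[] //.
have [/Hoo zo|an] := eqVneq a +oo; first by rewrite zo eqxx in zn.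
apply/subsetP => x; rewrite !inE => /andP[xV /existsP[e /andP[eS xe]]].
by rewrite xV; apply/existsP; exists e; rewrite sE.
Qed.

Lemma is_graph_sub (V : {set T}) (E : {set {set T}}) (f : {set T} -> R)
  (a : \bar R) : is_graph V E -> is_graph (subV V E f a) (subE E f a).
Proof.
move=> /forall_inP HG; apply/forall_inP => e eS.
have eE : e \in E by move: eS; rewrite inE => /andP[].
case/andP: (HG e eE) => -> /subsetP eV /=.
rewrite /subV; case: ifP => _; first by apply/subsetP.
apply/subsetP => x xe; rewrite inE eV //=; apply/existsP; exists e.
by rewrite eS.
Qed.

Lemma transfer (F : feature T) (HF : monotone_feature F) V E
  (HG : is_graph V E) (f1 f2 g : {set T} -> R) (a b z : \bar R) X :
  (forall e, e \in E -> (f1 e)%:E <= a -> (g e)%:E <= z) -> (a = +oo -> z = +oo) ->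
  (forall e, e \in E -> (g e)%:E <= z -> (f2 e)%:E <= b) -> (z = +oo -> b = +oo) ->
  Fset_at F V E f1 a X -> Fset_at F V E f2 b X -> Fset_at F V E g z X.
Proof.
move=> H1 H1o H2 H2o /andP[X1 _] /andP[_ F2].
have sE1 := subE_sub H1; have sV1 := subV_sub V sE1 H1o.
have sE2 := subE_sub H2; have sV2 := subV_sub V sE2 H2o.
have Xz : X \subset items (subV V E g z) (subE E g z).
  exact: subset_trans X1 (items_sub sV1 sE1).
rewrite /Fset_at Xz /=.
apply: (HF.1 _ _ _ _ _ _ _ sV2 sE2 Xz F2); exact: is_graph_sub.
Qed.

End Helpers.
Unset Implicit Arguments.

Theorem proposition4 (T : finType) (R : realType) (F : feature T)
  (HF : monotone_feature F)
  (V : {set T}) (E : {set {set T}}) (HG : is_graph V E)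
  (f g : {set T} -> R) (h : R) (hpos : 0 < h)
  (hfg : forall e, e \in E -> `|f e - g e| <= h) :
  forall (u : R) (v : \bar R), (u%:E < v)%E ->
    (sigmaF F V E f (u - h) (v + h%:E)%E <= sigmaF F V E g u v)%N /\
    (rhoF F V E f (u - h) (v + h%:E)%E <= rhoF F V E g u v)%N.
Proof.
move=> u v uv.
have fg : forall e, e \in E -> f e <= g e + h.
  by move=> e /hfg; rewrite ler_norml => /andP[H1 H2]; lra.
have gf : forall e, e \in E -> g e <= f e + h.
  by move=> e /hfg; rewrite ler_norml => /andP[H1 H2]; lra.
have key : forall (a b z : \bar R) X,
    (a + h%:E <= z)%E -> (z + h%:E <= b)%E ->
    Fset_at F V E f a X -> Fset_at F V E f b X -> Fset_at F V E g z X.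
  move=> a b z X az zb; apply: (transfer HF HG).
  - move=> e eE le; apply: le_trans az; apply: le_trans (leeD2r _ le).
    by rewrite -EFinD lee_fin gf.
  - by move=> ao; move: az; rewrite ao /= leye_eq => /eqP.
  - move=> e eE le; apply: le_trans zb; apply: le_trans (leeD2r _ le).
    by rewrite -EFinD lee_fin fg.
  - by move=> zo; move: zb; rewrite zo /= leye_eq => /eqP.
split; apply: subset_leq_card; apply/subsetP => X; rewrite !inE => /asboolP H;
  apply/asboolP.
- move=> z uz zv; apply: (key (u - h)%:E (v + h%:E)%E).
  + by rewrite -EFinD subrK.
  + exact: leeD2r.
  + apply: H; rewrite ?lexx //; apply: le_trans (leeD2r h%:E (ltW uv)).
    by rewrite -EFinD lee_fin; lra.
  + apply: H; rewrite ?lexx //; apply: le_trans (leeD2r h%:E (ltW uv)).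
    by rewrite -EFinD lee_fin; lra.
- case: H => [[w [wu Fw]] [w' [vw' Fw']]]; split.
  + exists u; split; first exact: lexx.
    apply: (key w%:E w'); last exact: Fw'; last exact: Fw.
    * by rewrite -EFinD lee_fin -lerBrDr.
    * by apply: le_trans vw'; apply: leeD2r; apply: ltW.
  + exists v; split; first exact: lexx.
    apply: (key w%:E w'); last exact: Fw'; last exact: Fw; last exact: vw'.
    apply: le_trans (ltW uv); by rewrite -EFinD lee_fin -lerBrDr.
Qed.
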